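(* Let $m,n\geq 6$. Then $\phi(P_{m-5}\cup W_{n-1},x)=\phi(P_{n-5}\cup W_{m-1},x)$; that is, $P_{m-5}\cup W_{n-1}$ and $P_{n-5}\cup W_{m-1}$ are cospectral with respect to the adjacency matrix. Moreover $ME(P_{m-5}\cup W_{n-1})=ME(P_{n-5}\cup W_{m-1})$.
   Context: $P_t$ denotes the path with $t$ edges (vertices $v_1,\dots,v_{t+1}$). For $N\geq 5$, $W_N$ is the tree obtained from $P_{N-2}$ (vertices $v_1,\dots,v_{N-1}$) by attaching one new pendent vertex to $v_2$ and one new pendent vertex to $v_{N-2}$. $\cup$ denotes disjoint union. $\phi(G,x)$ is the characteristic polynomial of the adjacency matrix of the graph $G$. For a graph $G$ on $n'$ vertices with $m(G,k)$ the number of $k$-edge matchings ($m(G,0)=1$), the matching polynomial is $\varphi(G,x)=\sum_{k\geq0}(-1)^km(G,k)x^{n'-2k}$ and the matching energy $ME(G)$ is the sum of absolute values of all roots (with multiplicity) of $\varphi(G,x)$. *)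

(* Defs.v *)
From HB Require Import structures.
From mathcomp Require Import all_boot all_order all_algebra all_field.
Set Implicit Arguments. Unset Strict Implicit. Unset Printing Implicit Defensive.
Import Order.TTheory GRing.Theory Num.Theory.
Local Open Scope ring_scope.

(* A finite simple graph on the vertex set 'I_nv, given by a symmetric
   irreflexive adjacency relation (all graphs built below are such). *)
Record sgraph := SGraph { nv : nat; adj : rel 'I_nv }.

(* P_t : path with t edges, vertices v_1..v_{t+1} encoded as 0..t. *)
Definition path_graph (t : nat) : sgraph :=
  @SGraph t.+1 (fun i j => (i.+1 == j :> nat) || (j.+1 == i :> nat)).

(* W_N (meaningful for N >= 5): path v_1..v_{N-1} (encoded 0..N-2), plus a
   pendent vertex (index N-1) attached to v_2 (index 1) and a pendent vertex
   (index N) attached to v_{N-2} (index N-3). *)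
Definition W_edge (N : nat) (i j : nat) : bool :=
  [|| (i < N.-1) && (j < N.-1) && ((i.+1 == j) || (j.+1 == i)),
      (i == N.-1) && (j == 1%N), (j == N.-1) && (i == 1%N),
      (i == N) && (j == N - 3) | (j == N) && (i == N - 3)]%N.

Definition W_graph (N : nat) : sgraph :=
  @SGraph N.+1 (fun i j => W_edge N i j).

(* disjoint union G ∪ H : vertices of G first, then those of H *)
Definition dunion (G H : sgraph) : sgraph :=
  @SGraph (nv G + nv H) (fun i j =>
    match split i, split j with
    | inl a, inl b => adj a b
    | inr a, inr b => adj a b
    | _, _ => false
    end).

Definition adj_mx (G : sgraph) : 'M[int]_(nv G) :=
  \matrix_(i, j) (adj i j)%:R.

Definition charpoly_graph (G : sgraph) : {poly int} := char_poly (adj_mx G).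

Definition is_matching (G : sgraph) (M : {set 'I_(nv G) * 'I_(nv G)}) : bool :=
  [forall e in M, (e.1 < e.2)%N && adj e.1 e.2] &&
  [forall e1 in M, forall e2 in M,
     (e1 != e2) ==> [disjoint [set e1.1; e1.2] & [set e2.1; e2.2]]].

Definition num_matchings (G : sgraph) (k : nat) : nat :=
  #|[set M : {set 'I_(nv G) * 'I_(nv G)} | is_matching M && (#|M| == k)]|.

(* matching polynomial  sum_{k>=0} (-1)^k m(G,k) x^{n'-2k}  (terms with
   2k > n' vanish since m(G,k) = 0 there), with complex coefficients *)
Definition matching_poly (G : sgraph) : {poly algC} :=
  \sum_(k < (nv G)./2.+1)
     ((-1) ^+ k * (num_matchings G k)%:R) *: 'X^(nv G - 2 * k).

Definition matching_roots (G : sgraph) : seq algC :=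
  sval (closed_field_poly_normal (matching_poly G)).

Definition matching_energy (G : sgraph) : algC :=
  \sum_(z <- matching_roots G) `|z|.

(* Main.v *)
Require Import Defs.
From HB Require Import structures.
From mathcomp Require Import all_boot all_order all_algebra all_field.
From mathcomp Require Import zify ring.
From Stdlib Require Import FunctionalExtensionality.
Set Implicit Arguments. Unset Strict Implicit. Unset Printing Implicit Defensive.
Import Order.TTheory GRing.Theory Num.Theory.
Local Open Scope ring_scope.

Definition padj (i j : nat) : bool := ((i.+1 == j) || (j.+1 == i))%N.
Definition pp (a : nat) (i j : nat) : bool := padj i j && ((i < a) == (j < a))%N.
Definition fG (a N : nat) (i j : nat) : bool :=
  ((i < a) && (j < a) && padj i j || (a <= i) && (a <= j) && W_edge N (i - a) (j - a))%N.
Definition bf (f : nat -> nat -> bool) (u : nat) := fun i j => f (bump u i) (bump u j).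

Section Abstract.
Variables (R : comRingType) (x y : R) (Phi : (nat -> nat -> bool) -> nat -> R).
Hypothesis Hext : forall f g k, (forall i j, (i < k)%N -> (j < k)%N -> f i j = g i j) -> Phi f k = Phi g k.
Hypothesis Hiso : forall f k v, (v <= k)%N -> (forall j, (j <= k)%N -> ~~ f v j && ~~ f j v) ->
  Phi f k.+1 = x * Phi (bf f v) k.
Hypothesis Hleaf : forall f k u, (u <= k)%N -> ~~ f k.+1 k.+1 ->
  (forall j, (j <= k)%N -> (f k.+1 j == (j == u)) && (f j k.+1 == (j == u))) ->
  Phi f k.+2 = x * Phi f k.+1 + y * Phi (bf f u) k.
Hypothesis Hbase : forall f, Phi f 0 = 1.

Definition p b := Phi padj b.

Lemma pS b : p b.+2 = x * p b.+1 + y * p b.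
Proof.
rewrite /p (Hleaf (u := b)) //; last by move=> j hj; rewrite /padj; lia.
  2: by rewrite /padj; lia.
congr (_ + y * _); apply: Hext => i j hi hj; rewrite /bf /bump /padj; lia.
Qed.

Lemma p0 : p 0 = 1. Proof. exact: Hbase. Qed.
Lemma p1 : p 1 = x.
Proof. rewrite /p (Hiso (v := 0)) ?Hbase ?mulr1 //; move=> j; rewrite /padj; lia. Qed.

Lemma ppE a b : Phi (pp a) (a + b) = p a * p b.
Proof.
elim: b {-2}b (leqnn b) => [|b IH] [|[|c]] hc.
- by rewrite addn0 p0 mulr1; apply: Hext => i j hi hj; rewrite /pp /padj; lia.
- by [].
- by [].
- by rewrite addn0 p0 mulr1; apply: Hext => i j hi hj; rewrite /pp /padj; lia.
- rewrite p1 addn1 (Hiso (v := a)) //; last by move=> j hj; rewrite /pp /padj; lia.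
  rewrite mulrC; congr (_ * _); apply: Hext => i j hi hj; rewrite /bf /pp /bump /padj; lia.
- rewrite pS !addnS (Hleaf (u := (a + c)%N)) //; last (by move=> j hj; rewrite /pp /padj; lia).
   2: by rewrite /pp /padj; lia.
  rewrite -addnS IH; last lia.
  rewrite (_ : Phi (bf (pp a) (a + c)) (a + c) = p a * p c); first by ring.
  rewrite -IH; last lia.
  apply: Hext => i j hi hj; rewrite /bf /pp /bump /padj; lia.
Qed.


Definition U (a : nat) (H : nat -> nat -> bool) (i j : nat) : bool :=
  ((i < a) && (j < a) && padj i j || (a <= i) && (a <= j) && H (i - a) (j - a))%N.

Lemma U_bf a H t i j : bf (U a H) (a + t) i j = U a (bf H t) i j.
Proof.
rewrite /bf /U; case: (ltnP i a) => hi; case: (ltnP j a) => hj.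
- have -> : bump (a + t) i = i by rewrite /bump; lia.
  have -> : bump (a + t) j = j by rewrite /bump; lia.
  by rewrite (leqNgt a i) (leqNgt a j) hi hj.
- have -> : bump (a + t) i = i by rewrite /bump; lia.
  rewrite (leqNgt a i) hi /= ?orbF /bump; lia.
- have -> : bump (a + t) j = j by rewrite /bump; lia.
  rewrite (leqNgt a j) hj /= ?andbF ?orbF /bump; lia.
- have -> : (bump (a + t) i - a = bump t (i - a))%N by rewrite /bump; lia.
  have -> : (bump (a + t) j - a = bump t (j - a))%N by rewrite /bump; lia.
  have -> : (bump (a + t) i < a)%N = false by rewrite /bump; lia.
  have -> : (a <= bump (a + t) i)%N = true by rewrite /bump; lia.
  have -> : (a <= bump (a + t) j)%N = true by rewrite /bump; lia.
  by [].
Qed.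

Lemma UExt a H H' b : (forall i j, (i < b)%N -> (j < b)%N -> H i j = H' i j) ->
  Phi (U a H) (a + b) = Phi (U a H') (a + b).
Proof.
move=> e; apply: Hext => i j hi hj; rewrite /U.
case: (ltnP i a) => hi'; case: (ltnP j a) => hj' //=.
rewrite e //; lia.
Qed.

Lemma UBase a H b : (forall i j, (i < b)%N -> (j < b)%N -> H i j = padj i j) ->
  Phi (U a H) (a + b) = p a * p b.
Proof.
move=> e; rewrite (@UExt a H padj b e) -ppE; apply: Hext => i j _ _.
rewrite /U /pp /padj; lia.
Qed.

Lemma UIso a H b v : (v <= b)%N -> (forall t, (t <= b)%N -> ~~ H v t && ~~ H t v) ->
  Phi (U a H) (a + b.+1) = x * Phi (U a (bf H v)) (a + b).
Proof.
move=> hv e; rewrite addnS (Hiso (v := (a + v)%N)).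
- congr (_ * _); apply: Hext => i j _ _; exact: U_bf.
- lia.
move=> j hj; rewrite /U.
have -> : (a + v - a = v)%N by lia.
case: (ltnP j a) => hj' /=.
  rewrite ?andbF ?andFb ?orbF ?orFb; lia.
have := e (j - a)%N; rewrite (_ : (j - a <= b)%N); last lia.
move=> /(_ isT) /andP [/negbTE -> /negbTE ->]; rewrite ?andbF ?andFb ?orbF ?orFb; lia.
Qed.

Lemma ULeaf a H b u : (u <= b)%N -> ~~ H b.+1 b.+1 ->
  (forall t, (t <= b)%N -> (H b.+1 t == (t == u)) && (H t b.+1 == (t == u))) ->
  Phi (U a H) (a + b.+2) = x * Phi (U a H) (a + b.+1) + y * Phi (U a (bf H u)) (a + b).
Proof.
move=> hu hb e; rewrite !addnS (Hleaf (u := (a + u)%N)).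
- rewrite -addnS; congr (_ + y * _); apply: Hext => i j _ _; exact: U_bf.
- lia.
- rewrite /U (_ : (a + b).+1 - a = b.+1)%N; last lia.
  rewrite (negbTE hb); lia.
move=> j hj; rewrite /U (_ : (a + b).+1 - a = b.+1)%N; last lia.
case: (ltnP j a) => hj' /=.
  rewrite ?andbF ?andFb ?orbF ?orFb; lia.
have := e (j - a)%N; rewrite (_ : (j - a <= b)%N); last lia.
case/(_ isT)/andP => /eqP -> /eqP ->; rewrite ?andbF ?andFb ?orbF ?orFb; lia.
Qed.

Lemma bumpL u t : (t < u)%N -> bump u t = t. Proof. rewrite /bump; lia. Qed.
Lemma bumpR u t : (u <= t)%N -> bump u t = t.+1. Proof. rewrite /bump; lia. Qed.
Lemma WE c i j : W_edge (c + 5) i j = [|| (i < c+4) && (j < c+4) && ((i.+1 == j) || (j.+1 == i)), (i == c+4) && (j == 1), (j == c+4) && (i == 1), (i == c+5) && (j == c+2) | (j == c+5) && (i == c+2)]%N.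
Proof. rewrite /W_edge (_ : (c + 5).-1 = c + 4)%N; last lia. by rewrite (_ : c + 5 - 3 = c + 2)%N; last lia. Qed.
Ltac bumps := repeat match goal with |- context [bump ?u ?t] => assert_fails (idtac; match t with context [bump _ _] => idtac end); let h := fresh in case: (ltnP t u) => h; [rewrite (@bumpL _ _ h) | rewrite (@bumpR _ _ h)] end.
Ltac bt := try (apply/andP; split; try apply/eqP); rewrite /bf ?WE /padj; bumps; lia.

Local Open Scope nat_scope.
Lemma fGE a c : Phi (U a (W_edge (c + 5))) (a + (c + 5).+1) = (x^+2 * (x^+2 + 4%:R * y) * p a * p c.+2)%R.
Proof.
have h2 : c + 2 = c.+2 by lia.
have E1 : Phi (U a (W_edge (c + 5))) (a + (c + 4).+1) = (x * (p a * p c.+4) + y * (x * (p a * p c.+2)))%R.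
  rewrite (_ : (c + 4).+1 = (c + 3).+2); last lia.
  rewrite (@ULeaf a _ (c + 3) 1); first last.
  - move=> j hj; bt.
  - bt.
  - lia.
  rewrite (@UBase a _ (c + 3).+1); last by move=> i j hi hj; bt.
  rewrite (_ : (c + 3 = (c + 2).+1)%N); last lia.
  rewrite (@UIso a _ (c + 2) 0); first last.
  - move=> j hj; bt.
  - lia.
  rewrite (@UBase a _ (c + 2)); last by move=> i j hi hj; bt.
  by rewrite h2.
have E2 : Phi (U a (bf (W_edge (c + 5)) (c + 2))) (a + (c + 4)) =
   (x * (x * (p a * p c.+2)) + y * (x * (x * (p a * p c))))%R.
  rewrite (_ : (c + 4 = (c + 2).+2)%N); last lia.
  rewrite (@ULeaf a _ (c + 2) 1); first last.
  - move=> j hj; bt.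
  - bt.
  - lia.
  rewrite (@UIso a _ (c + 2) (c + 2)); first last.
  - move=> j hj; bt.
  - lia.
  rewrite (@UBase a (bf (bf (W_edge (c + 5)) (c + 2)) (c + 2)) (c + 2)); last by move=> i j hi hj; bt.
  rewrite (_ : a + (c + 2) = a + (c + 1).+1); last lia.
  rewrite (@UIso a (bf (bf (W_edge (c + 5)) (c + 2)) 1) (c + 1) (c + 1)); first last.
  - move=> j hj; bt.
  - lia.
  rewrite (_ : (c + 1 = c.+1)%N); last lia.
  rewrite (@UIso a _ c 0); first last.
  - move=> j hj; bt.
  - lia.
  rewrite (@UBase a _ c); last by move=> i j hi hj; bt.
  by rewrite h2.
rewrite (_ : (c + 5).+1 = (c + 4).+2); last lia.
rewrite (@ULeaf a _ (c + 4) (c + 2)); first last.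
- move=> j hj; bt.
- bt.
- lia.
rewrite E1 E2 !pS; ring.
Qed.

Lemma gen m n : 6 <= m -> 6 <= n ->
  Phi (U (m - 5).+1 (W_edge (n - 1))) ((m - 5).+1 + (n - 1).+1) =
  Phi (U (n - 5).+1 (W_edge (m - 1))) ((n - 5).+1 + (m - 1).+1).
Proof.
move=> hm hn.
rewrite (_ : n - 1 = n - 6 + 5); last lia.
rewrite (_ : m - 1 = m - 6 + 5); last lia.
rewrite !fGE (_ : (m - 5).+1 = (m - 6).+2); last lia.
rewrite (_ : (n - 5).+1 = (n - 6).+2); last lia.
by rewrite -!mulrA [(p (m - 6).+2 * _)%R]mulrC.
Qed.
End Abstract.

Local Open Scope ring_scope.

Definition Gf (f : nat -> nat -> bool) (k : nat) : sgraph := @SGraph k (fun i j : 'I_k => f i j).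
Definition CM f k := char_poly_mx (adj_mx (Gf f k)).
Definition Dp f k := charpoly_graph (Gf f k).

Lemma CME f k (i j : 'I_k) : CM f k i j = 'X *+ (val i == val j) - ((f i j)%:R : int)%:P.
Proof. by rewrite /CM !mxE. Qed.

Lemma Dp_ext f g k : (forall i j, (i < k)%N -> (j < k)%N -> f i j = g i j) -> Dp f k = Dp g k.
Proof.
move=> e; rewrite /Dp /charpoly_graph /char_poly; congr (\det _).
apply/matrixP => i j; by rewrite -!/(CM _ _) (CME f) (CME g) (e i j (ltn_ord i) (ltn_ord j)).
Qed.

Lemma Dp_base f : Dp f 0 = 1.
Proof. by rewrite /Dp /charpoly_graph /char_poly det_mx00. Qed.

Lemma CM_sub f k (u : 'I_k.+1) : row' u (col' u (CM f k.+1)) = CM (bf f u) k.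
Proof.
apply/matrixP => i j; rewrite !mxE /=.
by rewrite (inj_eq (@lift_inj _ u)).
Qed.

Lemma Dp_iso f k v : (v <= k)%N -> (forall j, (j <= k)%N -> ~~ f v j && ~~ f j v) ->
  Dp f k.+1 = 'X * Dp (bf f v) k.
Proof.
move=> hv e; rewrite /Dp /charpoly_graph /char_poly -!/(CM _ _).
have hv' : (v < k.+1)%N by [].
rewrite (expand_det_row _ (Ordinal hv')) (bigD1 (Ordinal hv')) //= big1 ?addr0.
  rewrite CME /= eqxx /cofactor CM_sub -signr_odd oddD addbb expr0 mul1r.
  have := e v hv; case/andP => /negbTE -> _.
  by rewrite mulr1n subr0.
move=> j hj; rewrite CME /=.
have := e j (ltn_ord j : (j < k.+1)%N); case/andP => /negbTE -> _.
rewrite (_ : (v == j :> nat) = false) ?subr0 ?mul0r //.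
by apply/negbTE; move: hj; apply: contra => /eqP h; apply/eqP/val_inj.
Qed.

Lemma Dp_leaf f k u : (u <= k)%N -> ~~ f k.+1 k.+1 ->
  (forall j, (j <= k)%N -> (f k.+1 j == (j == u)) && (f j k.+1 == (j == u))) ->
  Dp f k.+2 = 'X * Dp f k.+1 + (-1) * Dp (bf f u) k.
Proof.
move=> hu hl e.
have hu2 : (u < k.+2)%N by lia.
have hu1 : (u < k.+1)%N by lia.
rewrite /Dp /charpoly_graph /char_poly -!/(CM _ _).
rewrite (expand_det_row _ ord_max) (bigD1 ord_max) //= (bigD1 (Ordinal hu2)) /=; last first.
  by rewrite -val_eqE /=; lia.
rewrite big1 ?addr0; last first.
  move=> j /andP [hj1 hj2]; rewrite CME /=.
  have hj : (j <= k)%N.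
    by move: hj1 (ltn_ord j); rewrite -val_eqE /=; lia.
  have /andP [/eqP -> _] := e j hj.
  have -> : (j == u :> nat) = false by move: hj2; rewrite -val_eqE /=; lia.
  by rewrite (_ : (k.+1 == j :> nat) = false) ?mulr0n ?subr0 ?mul0r //; lia.
rewrite !CME /= eqxx (negbTE hl) (_ : (k.+1 == u :> nat) = false); last lia.
have /andP [/eqP -> _] := e u hu; rewrite eqxx.
rewrite /cofactor CM_sub -signr_odd oddD addbb expr0 mul1r mulr1n subr0 mulr0n sub0r.
congr (_ * _ + _).
  rewrite -!/(charpoly_graph (Gf _ _)) -!/(Dp _ _); apply: Dp_ext => i j hi hj.
  by rewrite /bf !bumpL.
set M2 := row' _ _.
rewrite (expand_det_col _ ord_max) (bigD1 (Ordinal hu1)) //= big1 ?addr0; last first.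
  move=> i hi; rewrite /M2 !mxE /= -[lift _ _ == _]val_eqE /=.
  have hi' : (i <= k)%N by exact: ltn_ord i.
  rewrite (bumpL (_ : (i < k.+1)%N)) // (bumpR (_ : (u <= k)%N)) //.
  have /andP [_ /eqP ->] := e i hi'.
  have -> : (i == u :> nat) = false by move: hi; rewrite -val_eqE /=; lia.
  by rewrite (_ : (i == k.+1 :> nat) = false) ?mulr0n ?subr0 ?mul0r //; lia.
rewrite /M2 !mxE /= -[lift _ _ == _]val_eqE /=.
rewrite (bumpL (_ : (u < k.+1)%N)) // (bumpR (_ : (u <= k)%N)) //.
have /andP [_ /eqP ->] := e u hu; rewrite eqxx (_ : (u == k.+1 :> nat) = false); last lia.
rewrite mulr0n sub0r /cofactor.
have -> : row' (Ordinal hu1) (col' ord_max (row' ord_max (col' (Ordinal hu2) (CM f k.+2)))) = CM (bf f u) k.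
  apply/matrixP => i j; rewrite !mxE /= -[lift _ _ == _]val_eqE /= -[i == j]val_eqE /=.
  have hi := ltn_ord i; have hj := ltn_ord j.
  rewrite (bumpL (_ : (bump u i < k.+1)%N)); last by rewrite /bump; lia.
  rewrite (bumpL (_ : (j < k)%N)) //.
  have -> : (bump u i == bump u j) = (i == j); last by [].
  by apply/eqP/eqP => h; [apply: val_inj; move: h; rewrite /bump /=; lia | rewrite h].
rewrite /= (_ : (k.+1 + u = (u + k).+1)%N); last lia.
rewrite exprS (_ : ((true%:R : int)%:P) = 1); last by rewrite polyC1.

set s := (-1) ^+ (u + k); set D := \det _.
have ss : s * s = 1 by rewrite /s -exprD -signr_odd addnn odd_double.
transitivity (-1 * (s * s) * D); first by ring.
by rewrite ss mulr1.
Qed.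

Local Close Scope ring_scope.

Lemma disj4 (T : finType) (a1 a2 b1 b2 : T) :
  [disjoint [set a1; a2] & [set b1; b2]] = [&& a1 != b1, a1 != b2, a2 != b1 & a2 != b2].
Proof. by rewrite disjoints_subset subUset !sub1set !inE !negb_or -!andbA. Qed.

Definition NM f k r := num_matchings (Gf f k) r.

Section Pull.
Variables (a b : nat) (fa fb : nat -> nat -> bool) (h : 'I_a -> 'I_b).
Hypothesis hmono : forall i j : 'I_a, (h i < h j)%N = (i < j)%N.
Hypothesis hadj : forall i j : 'I_a, fa i j = fb (h i) (h j).

Lemma h_inj : injective h.
Proof.
move=> i j e; apply: val_inj => /=.
have := hmono i j; have := hmono j i; rewrite e ltnn; lia.
Qed.

Definition hh (e : 'I_a * 'I_a) : 'I_b * 'I_b := (h e.1, h e.2).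
Lemma hh_inj : injective hh.
Proof. by move=> [x1 x2] [y1 y2] [/h_inj -> /h_inj ->]. Qed.

Definition inR (M : {set 'I_b * 'I_b}) := [forall e in M, (e.1 \in codom h) && (e.2 \in codom h)].

Lemma L1 (M : {set 'I_a * 'I_a}) : @is_matching (Gf fa a) M -> @is_matching (Gf fb b) (hh @: M).
Proof.
move=> /andP [H1 H2]; apply/andP; split.
  apply/forall_inP => e /imsetP [e' he' ->] /=.
  have /andP [lt ad] := forall_inP H1 e' he'.
  by rewrite hmono lt -hadj.
apply/forall_inP => e1 /imsetP [e1' h1 ->]; apply/forall_inP => e2 /imsetP [e2' h2 ->].
apply/implyP => ne.
have ne' : e1' != e2' by apply: contra ne => /eqP ->.
have := implyP (forall_inP (forall_inP H2 e1' h1) e2' h2) ne'.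
by rewrite /= !disj4 !(inj_eq h_inj).
Qed.

Lemma L2 (M : {set 'I_b * 'I_b}) : @is_matching (Gf fb b) M -> @is_matching (Gf fa a) (hh @^-1: M).
Proof.
move=> /andP [H1 H2]; apply/andP; split.
  apply/forall_inP => e; rewrite inE => he /=.
  have /andP [lt ad] := forall_inP H1 _ he.
  by rewrite -hmono lt hadj.
apply/forall_inP => e1; rewrite inE => h1; apply/forall_inP => e2; rewrite inE => h2.
apply/implyP => ne.
have ne' : hh e1 != hh e2 by rewrite (inj_eq hh_inj).
have := implyP (forall_inP (forall_inP H2 _ h1) _ h2) ne'.
by rewrite /= !disj4 !(inj_eq h_inj).
Qed.

Lemma L3 (M : {set 'I_b * 'I_b}) : inR M -> hh @: (hh @^-1: M) = M.
Proof.
move=> hr; apply/setP => e; apply/imsetP/idP.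
  by case=> e'; rewrite inE => he ->.
move=> he; have /andP [c1 c2] := forall_inP hr e he.
case/codomP: c1 => x ex; case/codomP: c2 => y ey.
exists (x, y); last by rewrite /hh /= -ex -ey; case: (e).
by rewrite inE /hh /= -ex -ey; case: (e) he.
Qed.

Lemma L4 (M : {set 'I_a * 'I_a}) : inR (hh @: M).
Proof. by apply/forall_inP => e /imsetP [e' _ ->] /=; rewrite !codom_f. Qed.

Lemma pull_card r :
  #|[set M : {set 'I_b * 'I_b} | [&& @is_matching (Gf fb b) M, #|M| == r & inR M]]| = NM fa a r.
Proof.
rewrite /NM /num_matchings -(card_imset _ (imset_inj hh_inj)).
congr #|pred_of_set _|; apply/setP => M; rewrite inE; apply/idP/imsetP.
  case/and3P => hm /eqP hc hr; exists (hh @^-1: M); last by rewrite L3.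
  by rewrite inE L2 //= -hc -{2}(L3 hr) card_imset //; apply: hh_inj.
case=> M'; rewrite inE => /andP [hm' /eqP hc'] ->.
by rewrite L1 // card_imset ?hc' ?eqxx ?L4 //; apply: hh_inj.
Qed.
End Pull.


Lemma NM_ext f g k r : (forall i j, (i < k)%N -> (j < k)%N -> f i j = g i j) -> NM f k r = NM g k r.
Proof.
move=> e; rewrite /NM (_ : Gf f k = Gf g k) //; rewrite /Gf; congr SGraph.
apply: functional_extensionality => i; apply: functional_extensionality => j.
exact: e.
Qed.

Lemma codom_lift n (w x : 'I_n.+1) : x != w -> x \in codom (lift w).
Proof. by case: (unliftP w x) => [j -> | ->]; [rewrite codom_f | rewrite eqxx]. Qed.

Lemma lift_mono n (w : 'I_n.+1) (i j : 'I_n) : (lift w i < lift w j)%N = (i < j)%N.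
Proof. rewrite /= /bump; lia. Qed.

Lemma match_sub k f (M M' : {set 'I_k * 'I_k}) : @is_matching (Gf f k) M -> M' \subset M ->
  @is_matching (Gf f k) M'.
Proof.
move=> /andP [H1 H2] sub; apply/andP; split.
  by apply/forall_inP => e he; apply: (forall_inP H1); apply: (subsetP sub).
apply/forall_inP => e1 h1; apply/forall_inP => e2 h2.
exact: (forall_inP (forall_inP H2 _ (subsetP sub _ h1)) _ (subsetP sub _ h2)).
Qed.

Lemma match_U1 k f (M : {set 'I_k * 'I_k}) (E : 'I_k * 'I_k) : @is_matching (Gf f k) M ->
  (E.1 < E.2)%N -> f E.1 E.2 ->
  (forall e, e \in M -> [disjoint [set e.1; e.2] & [set E.1; E.2]]) ->
  @is_matching (Gf f k) (E |: M).
Proof.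
move=> /andP [H1 H2] lt ad dj; apply/andP; split.
  apply/forall_inP => e; rewrite in_setU1 => /orP [/eqP -> | he] /=; first by rewrite lt ad.
  exact: (forall_inP H1).
apply/forall_inP => e1; rewrite in_setU1 => /orP [/eqP -> | h1];
apply/forall_inP => e2; rewrite in_setU1 => /orP [/eqP -> | h2]; apply/implyP => ne.
- by rewrite eqxx in ne.
- by rewrite disjoint_sym; apply: dj.
- exact: dj.
- exact: (implyP (forall_inP (forall_inP H2 _ h1) _ h2)).
Qed.

Lemma NM_iso f k v r : (v <= k)%N -> (forall j, (j <= k)%N -> ~~ f v j && ~~ f j v) ->
  NM f k.+1 r = NM (bf f v) k r.
Proof.
move=> hv e; have hv' : (v < k.+1)%N by [].
rewrite -(@pull_card k k.+1 (bf f v) f (lift (Ordinal hv'))) //; last exact: lift_mono.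
rewrite /NM /num_matchings; congr #|pred_of_set _|; apply/setP => M; rewrite !inE.
case hm: (@is_matching (Gf f k.+1) M) => //=; case: (#|M| == r) => //=.
apply/esym/forall_inP => x hx; case/andP: hm => H1 _.
have /andP [_ ad] := forall_inP H1 x hx; rewrite /= in ad.
apply/andP; split; apply: codom_lift; apply/negP => /eqP ex.
  have hv2 : v = x.1 by rewrite ex.
  by have := e _ (ltn_ord x.2 : (x.2 <= k)%N); rewrite hv2 ad.
have hv2 : v = x.2 by rewrite ex.
by have := e _ (ltn_ord x.1 : (x.1 <= k)%N); rewrite hv2 ad andbF.
Qed.

Lemma NM_leaf f k u r : (u <= k)%N -> (forall j, (j <= k)%N -> f j k.+1 = (j == u)) ->
  NM f k.+2 r.+1 = NM f k.+1 r.+1 + NM (bf f u) k r.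
Proof.
move=> hu e.
have hu2 : (u < k.+2)%N by lia.
have hu1 : (u < k.+1)%N by lia.
pose E := (Ordinal hu2, ord_max : 'I_k.+2).
rewrite {1}/NM /num_matchings -(cardsID [set M : {set 'I_k.+2 * 'I_k.+2} | E \in M]) addnC; congr (_ + _).
  rewrite -(@NM_ext (bf f k.+1)); last by move=> i j hi hj; rewrite /bf !bumpL.
  rewrite -(@pull_card k.+1 k.+2 (bf f k.+1) f (lift ord_max)) //; last exact: lift_mono.
  congr #|pred_of_set _|; apply/setP => M; rewrite !inE.
  case hm: (@is_matching (Gf f k.+2) M) => //=; case: (#|M| == r.+1); rewrite /= ?andbF ?andbT //.
  apply/idP/idP.
    move=> hE; apply/forall_inP => x hx; case/andP: hm => H1 _.
    have /andP [lt ad] := forall_inP H1 x hx; rewrite /= in ad.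
    apply/andP; split; apply: codom_lift; apply/negP => /eqP ex.
      by move: lt (ltn_ord x.2); rewrite ex /=; lia.
    have hx1 : (x.1 <= k)%N by move: lt; rewrite ex /=; lia.
    move: ad; rewrite ex /= e // => /eqP hx1u.
    move: hE; apply/negP/negPn; rewrite (_ : E = x) //.
    by rewrite /E; case: x hx ex hx1u {lt hx1} => x1 x2 /= _ -> hx1u; congr (_, _); apply: val_inj.
  move=> hr; apply/negP => hE; have /andP [_ c2] := forall_inP hr E hE.
  case/codomP: c2 => y /(congr1 val) /=; rewrite /bump; have := ltn_ord y; lia.
pose h2 := fun i : 'I_k => lift ord_max (lift (Ordinal hu1) i).
have b1 : forall i : 'I_k, bump k.+1 (bump u i) = bump u i.
  by move=> i; have := ltn_ord i; rewrite /bump; lia.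
have h2mono : forall i j : 'I_k, (h2 i < h2 j)%N = (i < j)%N.
  by move=> i j; rewrite /h2 /= !b1 /bump; lia.
have h2adj : forall i j : 'I_k, bf f u i j = f (h2 i) (h2 j).
  by move=> i j; rewrite /h2 /bf /= !b1.
have cod2 : forall x : 'I_k.+2, x != Ordinal hu2 -> x != ord_max -> x \in codom h2.
  move=> x n1 n2; case: (unliftP ord_max x) => [y ex | ex]; last by rewrite ex eqxx in n2.
  case: (unliftP (Ordinal hu1) y) => [z ey | ey].
    by rewrite ex ey -/(h2 z) codom_f.
  by move: n1; rewrite ex ey -val_eqE /= /bump; lia.
have h2u : forall y : 'I_k, (h2 y == Ordinal hu2) = false.
  by move=> y; rewrite -val_eqE /= b1 /bump; lia.
have h2m : forall y : 'I_k, (h2 y == ord_max) = false.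
  by move=> y; rewrite -val_eqE /= b1 /bump; have := ltn_ord y; lia.
rewrite -(pull_card h2mono h2adj r).
rewrite -(card_in_imset (f := fun M => M :\ E)); last first.
  move=> M1 M2; rewrite !inE => /andP [_ h1] /andP [_ h2'] eq.
  by rewrite -(setD1K h1) -(setD1K h2') /= eq.
congr #|pred_of_set _|; apply/setP => M'; apply/imsetP/idP.
  case=> M; rewrite !inE => /andP [/andP [hm /eqP hc] hE] ->.
  apply/and3P; split.
  - by apply: match_sub hm _; exact: subsetDl.
  - by apply/eqP; move: hc; rewrite (cardsD1 E M) hE => h; apply/eqP; rewrite -eqSS; apply/eqP; exact: h.
  apply/forall_inP => x; rewrite in_setD1 => /andP [nx hx].
  case/andP: hm => _ H2; have := implyP (forall_inP (forall_inP H2 _ hx) _ hE) nx.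
  rewrite disj4 => /and4P [n1 n2 n3 n4].
  by apply/andP; split; apply: cod2.
rewrite inE => /and3P [hm /eqP hc hr].
have hE : E \notin M'.
  apply/negP => hE; have /andP [_ c2] := forall_inP hr E hE.
  by case/codomP: c2 => y /eqP; rewrite eq_sym h2m.
exists (E |: M'); last by rewrite setU1K.
rewrite !inE eqxx andbT cardsU1 hE hc eqxx andbT.
apply: match_U1 => //=.
- by rewrite e.
move=> x hx; have /andP [c1 c2] := forall_inP hr _ hx.
case/codomP: c1 => y1 ->; case/codomP: c2 => y2 ->.
by rewrite disj4 !h2u !h2m.
Qed.


Lemma NM_bound f k r : (k < r)%N -> NM f k r = 0.
Proof.
move=> hr; rewrite /NM /num_matchings (_ : [set M | _] = set0) ?cards0 //.
apply/setP => M; rewrite !inE; apply/negP => /andP [/andP [_ H2] /eqP hc].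
have : (#|[set e.1 | e in M]| <= k)%N.
  by rewrite -[X in (_ <= X)%N](card_ord k); apply: max_card.
rewrite card_in_imset ?hc; first lia.
move=> e1 e2 h1 h2 /= eq; apply/eqP; apply/negPn/negP => ne.
have := implyP (forall_inP (forall_inP H2 _ h1) _ h2) ne.
by rewrite disj4 eq eqxx.
Qed.

Lemma NM0 f k : NM f k 0 = 1.
Proof.
rewrite /NM /num_matchings (_ : [set M | _] = [set set0]) ?cards1 //.
apply/setP => M; rewrite !inE cards_eq0; case: eqP => [-> | _]; last by rewrite andbF.
by rewrite andbT; apply/andP; split; apply/forall_inP => e; rewrite inE.
Qed.

Local Open Scope ring_scope.

Definition MG f k : {poly int} := \poly_(r < k.+1) (NM f k r)%:R.

Lemma coefMG f k r : (MG f k)`_r = (NM f k r)%:R.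
Proof.
rewrite coef_poly; case: ltnP => // h.
by rewrite NM_bound.
Qed.

Lemma MG_ext f g k : (forall i j, (i < k)%N -> (j < k)%N -> f i j = g i j) -> MG f k = MG g k.
Proof. by move=> e; apply/polyP => r; rewrite !coefMG (NM_ext r e). Qed.

Lemma MG_iso f k v : (v <= k)%N -> (forall j, (j <= k)%N -> ~~ f v j && ~~ f j v) ->
  MG f k.+1 = 1 * MG (bf f v) k.
Proof. by move=> hv e; rewrite mul1r; apply/polyP => r; rewrite !coefMG (NM_iso r hv e). Qed.

Lemma MG_leaf f k u : (u <= k)%N -> ~~ f k.+1 k.+1 ->
  (forall j, (j <= k)%N -> (f k.+1 j == (j == u)) && (f j k.+1 == (j == u))) ->
  MG f k.+2 = 1 * MG f k.+1 + 'X * MG (bf f u) k.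
Proof.
move=> hu _ e; rewrite mul1r; apply/polyP => r.
rewrite coefD coefXM !coefMG; case: r => [|r] /=.
  by rewrite !NM0 addr0.
rewrite (@NM_leaf f k u r) ?natrD //.
by move=> j hj; have /andP [_ /eqP ->] := e j hj.
Qed.

Lemma MG_base f : MG f 0 = 1.
Proof.
apply/polyP => r; rewrite coefMG coef1; case: r => [|r] /=; first by rewrite NM0.
by rewrite NM_bound.
Qed.

Local Close Scope ring_scope.

Lemma dunionE t N : dunion (path_graph t) (W_graph N) = Gf (U t.+1 (W_edge N)) (t.+1 + N.+1).
Proof.
rewrite /dunion /Gf /=; congr SGraph.
apply: functional_extensionality => i; apply: functional_extensionality => j.
case: splitP => i' ei; case: splitP => j' ej; rewrite /U ei ej /=.
- have hi := ltn_ord i'; have hj := ltn_ord j'.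
  have -> : (t.+1 <= i') = false by lia.
  by rewrite hi hj /padj /= orbF.
- have hi := ltn_ord i'.
  have -> : (t.+1 <= i') = false by lia.
  have -> : (t.+1 + j' < t.+1) = false by lia.
  by rewrite andbF.
- have hj := ltn_ord j'.
  have -> : (t.+1 <= j') = false by lia.
  have -> : (t.+1 + i' < t.+1) = false by lia.
  by rewrite andbF.
- have -> : (t.+1 + i' < t.+1) = false by lia.
  by rewrite !leq_addr !addKn.
Qed.


Unset Implicit Arguments.
Local Open Scope ring_scope.

Theorem theorem9 (m n : nat) (hm : (6 <= m)%N) (hn : (6 <= n)%N) :
  charpoly_graph (dunion (path_graph (m - 5)) (W_graph (n - 1)))
    = charpoly_graph (dunion (path_graph (n - 5)) (W_graph (m - 1)))
  /\
  matching_energy (dunion (path_graph (m - 5)) (W_graph (n - 1)))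
    = matching_energy (dunion (path_graph (n - 5)) (W_graph (m - 1))).
Proof.
rewrite !dunionE.
have hD := @gen _ 'X (-1) Dp Dp_ext Dp_iso Dp_leaf Dp_base m n hm hn.
split; first exact: hD.
have hM := @gen _ 1 'X MG MG_ext MG_iso MG_leaf MG_base m n hm hn.
have hN : forall r,
   num_matchings (Gf (U (m - 5).+1 (W_edge (n - 1))) ((m - 5).+1 + (n - 1).+1)) r =
   num_matchings (Gf (U (n - 5).+1 (W_edge (m - 1))) ((n - 5).+1 + (m - 1).+1)) r.
  move=> r; have := congr1 (fun p : {poly int} => p`_r) hM.
  by rewrite /= !coefMG => /eqP; rewrite eqr_nat => /eqP.
have K : ((m - 5).+1 + (n - 1).+1 = (n - 5).+1 + (m - 1).+1)%N by lia.
have hmp : matching_poly (Gf (U (m - 5).+1 (W_edge (n - 1))) ((m - 5).+1 + (n - 1).+1)) =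
           matching_poly (Gf (U (n - 5).+1 (W_edge (m - 1))) ((n - 5).+1 + (m - 1).+1)).
  rewrite /matching_poly /=.
  under eq_bigr do rewrite hN.
  by rewrite K (_ : (m - 5 + (n - 1).+1 = n - 5 + (m - 1).+1)%N) //; lia.
by rewrite /matching_energy /matching_roots hmp.
Qed.
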